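(* Let $(E,C)$ be a finite bipartite separated graph and let $A_{\mathrm{DE}}\subseteq E^1\cup(E^1)^{-1}$ be the set of dead ends. Then, for $v\in E^0$, the clopen set $\Omega(E,C)_v$ contains an isolated point if and only if $v\in V(A_{\mathrm{DE}})$. Consequently $\Omega(E,C)$ is a Cantor space if and only if $V(A_{\mathrm{DE}})=\emptyset$.
   Context: Separated graph $(E,C)$: $E=(E^0,E^1,r,s)$, $C=\bigsqcup_vC_v$ with $C_v$ a partition of $r^{-1}(v)$ into non-empty sets; $X_e$ is the element of $C$ containing $e$. Finite bipartite: $E$ finite, $E^0=E^{0,0}\sqcup E^{0,1}$, $s(E^1)=E^{0,1}$, $r(E^1)=E^{0,0}$. Admissible paths: words $\sigma_m\cdots\sigma_1$ in $E^1\sqcup(E^1)^{-1}$ forming a path in the double graph (where $e^{-1}$ goes from $r(e)$ to $s(e)$; paths are read right to left) such that no subword $ef^{-1}$ has $e=f$ and no subword $e^{-1}f$ has $X_e=X_f$; vertices are the trivial admissible paths. Range and source of a path are taken in the double graph. A choice path is an admissible path $\alpha=e\beta$ with $e\in E^1$ such that there exists $X\in C_{r(e)}$, $X\ne X_e$, with $|X|\ge2$. An element $\sigma\in E^1\cup(E^1)^{-1}$ is a dead end if no choice path has $\sigma$ as its initial (rightmost) letter. A set $A\subseteq E^1\cup(E^1)^{-1}$ is path closed if for every admissible path $\alpha$ whose initial letter lies in $A$, its terminal (leftmost) letter lies in $A$. $A$ is $\partial$-closed if: (1) whenever $v\in E^{0,1}$, $|s^{-1}(v)|\ge2$, $e\in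 s^{-1}(v)$ and $s^{-1}(v)\setminus\{e\}\subseteq A$, then $e^{-1}\in A$; (2) whenever $v\in E^{0,0}$, $|C_v|\ge2$, $X\in C_v$ and $Y^{-1}\cap A\ne\emptyset$ for every $Y\in C_v\setminus\{X\}$, then $X\subseteq A$. $\overline A$ is the smallest $\partial$-closed set containing $A$, and $V(A)=\{v\in E^{0,0}:X^{-1}\cap\overline A\ne\emptyset\ \forall X\in C_v\}\cup\{v\in E^{0,1}:s^{-1}(v)\subseteq\overline A\}$. Configuration space: $\mathbb F$ = free group on $E^1$; $\Omega(E,C)$ = set of $\xi\subseteq\mathbb F$ with $1\in\xi$, right-convex (if a reduced word $e_m^{\varepsilon_m}\cdots e_1^{\varepsilon_1}\in\xi$ then $e_k^{\varepsilon_k}\cdots e_1^{\varepsilon_1}\in\xi$ for $k<m$), and such that for every $\alpha\in\xi$ the set $\xi_\alpha=\{\sigma\in E^1\sqcup(E^1)^{-1}:\sigma\alpha\in\xi\}$ equals $s^{-1}(v)$ for some $v\in E^{0,1}$ or $\{e_X^{-1}:X\in C_v\}$ for some $v\in E^{0,0}$ and $e_X\in X$; topology from $\{0,1\}^{\mathbb F}$. For $v\in E^{0,1}$, $\Omega(E,C)_v=\{\xi:e\in\xi\}$ for any $e\in s^{-1}(v)$; for $v\in E^{0,0}$, $\Omega(E,C)_v=\{\xi:e^{-1}\in\xi\text{ for some }e\in X\}$ for any $X\in C_v$. *)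

(* Defs.v *)
From HB Require Import structures.
From mathcomp Require Import all_boot.
Set Implicit Arguments. Unset Strict Implicit. Unset Printing Implicit Defensive.

(* A finite bipartite separated graph (E,C).
   - vertices [vtx] and edges [edg] are finite types;
   - [part v = true] means v \in E^{0,1}, [part v = false] means v \in E^{0,0};
   - s(E^1) \subseteq E^{0,1}, r(E^1) \subseteq E^{0,0};
   - the partition C is encoded by a class label [cls : edg -> lbl]:
     X_e = [set f | cls f = cls e]; edges in one class share their range,
     so C_v = { X_e | r e = v } is a partition of r^{-1}(v) into non-empty sets. *)
Record bsg := BSG {
  vtx : finType;
  edg : finType;
  lbl : finType;
  part : vtx -> bool;
  src : edg -> vtx;
  rng : edg -> vtx;
  cls : edg -> lbl;
  src_part : forall e, part (src e) = true;
  rng_part : forall e, part (rng e) = false;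
  cls_rng : forall e f, cls e = cls f -> rng e = rng f
}.

Section SepGraph.
Variable G : bsg.

(* letters of E^1 \sqcup (E^1)^{-1}: (e,false) = e, (e,true) = e^{-1} *)
Definition letter : finType := (edg G * bool)%type.

Definition linv (a : letter) : letter := (a.1, ~~ a.2).

Definition lsrc (a : letter) : vtx G := if a.2 then rng a.1 else src a.1.
Definition ltgt (a : letter) : vtx G := if a.2 then src a.1 else rng a.1.

(* Words sigma_m ... sigma_1 are represented by the list [:: sigma_1; ...; sigma_m]
   (head = initial/rightmost letter, last = terminal/leftmost letter). *)

(* consecutive letters a = sigma_i, b = sigma_(i+1) of an admissible path *)
Definition adm_step (a b : letter) : bool :=
  [&& ltgt a == lsrc b,
      ~~ [&& ~~ b.2, a.2 & b.1 == a.1]             (* no subword e f^{-1}, e = f *)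
    & ~~ [&& b.2, ~~ a.2 & cls b.1 == cls a.1]].    (* no subword e^{-1} f, X_e = X_f *)

Definition admissible (w : seq letter) : bool := (w != [::]) && sorted adm_step w.

(* choice path: alpha = e beta, e \in E^1, with some X \in C_{r(e)}, X <> X_e, |X| >= 2 *)
Definition choice_path (w : seq letter) : Prop :=
  exists x0 : letter,
    admissible w /\ (last x0 w).2 = false /\
    exists f g : edg G, rng f = rng (last x0 w).1 /\ cls f <> cls (last x0 w).1 /\
                        cls g = cls f /\ g <> f.

Definition dead_end (a : letter) : Prop := ~ exists w, choice_path (a :: w).

Definition dclosed (B : letter -> Prop) : Prop :=
  (forall (v : vtx G) (e : edg G),
      part v = true -> src e = v ->
      (exists e', src e' = v /\ e' <> e) ->                      (* |s^{-1}(v)| >= 2 *)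
      (forall e', src e' = v -> e' <> e -> B (e', false)) ->
      B (e, true)) /\
  (forall (v : vtx G) (e : edg G),
      part v = false -> rng e = v ->                              (* X = X_e \in C_v *)
      (exists f, rng f = v /\ cls f <> cls e) ->                  (* |C_v| >= 2 *)
      (forall f, rng f = v -> cls f <> cls e ->
         exists g, cls g = cls f /\ B (g, true)) ->                (* Y^{-1} \cap B <> \emptyset *)
      forall g, cls g = cls e -> B (g, false)).                   (* X \subseteq B *)

Definition dclosure (A : letter -> Prop) (a : letter) : Prop :=
  forall B : letter -> Prop, (forall b, A b -> B b) -> dclosed B -> B a.

Definition Vset (A : letter -> Prop) (v : vtx G) : Prop :=
  (part v = false /\
     forall e, rng e = v -> exists g, cls g = cls e /\ dclosure A (g, true)) \/
  (part v = true /\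
     forall e, src e = v -> dclosure A (e, false)).

(* free group on E^1: reduced words *)
Definition reduced (w : seq letter) : bool := sorted (fun a b => b != linv a) w.

(* left multiplication sigma * alpha in the free group (alpha reduced) *)
Definition lmul (a : letter) (w : seq letter) : seq letter :=
  if last a w == linv a then take (size w).-1 w else rcons w a.

(* configuration space Omega(E,C): subsets of F given as predicates on reduced words *)
Definition config (xi : seq letter -> Prop) : Prop :=
  (forall w, xi w -> reduced w) /\
  xi [::] /\
  (forall w k, xi w -> xi (take k w)) /\
  (forall alpha, xi alpha ->
     (exists v, part v = true /\
        forall a, xi (lmul a alpha) <-> (a.2 = false /\ src a.1 = v)) \/
     (exists v, part v = false /\
        (forall a, xi (lmul a alpha) -> a.2 = true /\ rng a.1 = v) /\
        (forall e, rng e = v ->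
           exists g, (cls g = cls e /\ xi (lmul (g, true) alpha)) /\
             forall g', cls g' = cls e -> xi (lmul (g', true) alpha) -> g' = g))).

Definition config_v (v : vtx G) (xi : seq letter -> Prop) : Prop :=
  if part v then exists e, src e = v /\ xi [:: (e, false)]
  else exists e, rng e = v /\ exists f, cls f = cls e /\ xi [:: (f, true)].

Definition agree (F : seq (seq letter)) (xi eta : seq letter -> Prop) : Prop :=
  forall w, w \in F -> (xi w <-> eta w).

(* xi is an isolated point of Omega(E,C) (product topology on {0,1}^F):
   some basic (cylinder) neighbourhood meets Omega only in xi *)
Definition isolated (xi : seq letter -> Prop) : Prop :=
  exists F : seq (seq letter),
    forall eta, config eta -> agree F eta xi -> forall w, eta w <-> xi w.

End SepGraph.

(* A subspace S of {0,1}^T (product topology) is a Cantor space: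
   it is homeomorphic to {0,1}^N. Points of {0,1}^T are predicates on T
   (identified extensionally). *)
Definition cantor_space (T : eqType) (S : (T -> Prop) -> Prop) : Prop :=
  exists (f : (T -> Prop) -> (nat -> bool)) (g : (nat -> bool) -> (T -> Prop)),
    (forall x, S (g x)) /\
    (forall xi, S xi -> forall t, g (f xi) t <-> xi t) /\
    (forall x n, f (g x) n = x n) /\
    (* f continuous on S *)
    (forall xi, S xi -> forall n, exists F : seq T,
        forall eta, S eta -> (forall t, t \in F -> (eta t <-> xi t)) -> f eta n = f xi n) /\
    (* g continuous *)
    (forall x t, exists N, forall y, (forall i, i < N -> y i = x i) -> (g y t <-> g x t)).

(* Main.v *)
Require Import Defs.
From Stdlib Require Import Classical ClassicalEpsilon FunctionalExtensionality PropExtensionality.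
From mathcomp Require Import all_boot zify.
Set Implicit Arguments. Unset Strict Implicit. Unset Printing Implicit Defensive.

Definition asb (P : Prop) : bool :=
  if excluded_middle_informative P then true else false.

Lemma asbP (P : Prop) : asb P = true <-> P.
Proof. by rewrite /asb; case: excluded_middle_informative. Qed.

Lemma asbF (P : Prop) : asb P = false <-> ~ P.
Proof. by rewrite /asb; case: excluded_middle_informative. Qed.

Lemma least_nat (Q : nat -> Prop) : (exists m, Q m) ->
  exists m, Q m /\ forall j, j < m -> ~ Q j.
Proof.
case=> m Qm; elim: m {-2}m (leqnn m) Qm => [|n IH] m Hm Qm.
  by exists m; split=> // j Hj; have := leq_trans Hj Hm.
case: (classic (exists j, j < m /\ Q j)) => [[j [Hj Qj]]|N].
  by apply: (IH j) => //; rewrite -ltnS (leq_trans Hj Hm).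
by exists m; split=> // j Hj Qj; apply: N; exists j.
Qed.

Section PerfectCantor.
Variable P : (nat -> bool) -> Prop.
Hypothesis Pcl : forall x, (forall N, exists y, P y /\ forall i, i < N -> y i = x i) -> P x.
Hypothesis Pne : exists x, P x.
Hypothesis Pperf : forall x, P x -> forall N, exists y, P y /\
   (forall i, i < N -> y i = x i) /\ exists i, y i != x i.

Definition ext (s : seq bool) := exists z, P z /\ forall i, i < size s -> z i = nth false s i.
Definition br s := ext (rcons s true) /\ ext (rcons s false).

Definition step (y : nat -> bool) (p : seq bool * nat) : seq bool * nat :=
  if asb (br p.1) then (rcons p.1 (y p.2), p.2.+1)
  else (rcons p.1 (asb (ext (rcons p.1 true))), p.2).
Definition pre y n := iter n (step y) ([::], 0).
Definition Gm y n := nth false (pre y n.+1).1 n.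
Definition pref (x : nat -> bool) n := mkseq x n.
Definition brx x m := br (pref x m).
Definition nbspec x n m := n <= m /\ brx x m /\ forall j, n <= j -> j < m -> ~ brx x j.
Definition nextbr x n := epsilon (inhabits 0) (nbspec x n).
Fixpoint nk x k := match k with 0 => nextbr x 0 | k.+1 => nextbr x (nk x k).+1 end.
Definition Fm x k := x (nk x k).

Lemma pre_size y n : size (pre y n).1 = n /\ (pre y n).2 <= n.
Proof.
elim: n => //= n [IH1 IH2]; rewrite /step; case: asb => /=; rewrite size_rcons IH1 //.
by split=> //; apply: leq_trans IH2 _.
Qed.

Lemma pre_S y n : exists b, pre y n.+1 = (rcons (pre y n).1 b, (pre y n.+1).2).
Proof. rewrite /= /step; case: asb => /=; eexists; reflexivity. Qed.

Lemma nth_pre y i n m : i < n -> n <= m -> nth false (pre y m).1 i = nth false (pre y n).1 i.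
Proof.
move=> Hi; elim: m => [|m IH]; first by rewrite leqn0 => /eqP ->.
rewrite leq_eqVlt => /orP [/eqP -> //|Hm].
have [b ->] := pre_S y m; rewrite /= nth_rcons (pre_size y m).1.
by rewrite (leq_trans Hi Hm) IH.
Qed.

Lemma pref_G y n : pref (Gm y) n = (pre y n).1.
Proof.
apply: (@eq_from_nth _ false); first by rewrite size_mkseq (pre_size y n).1.
move=> i; rewrite size_mkseq => Hi; rewrite nth_mkseq //.
by rewrite /Gm (nth_pre y (ltnSn i) Hi).
Qed.

Lemma ext_rcons s : ext s -> ext (rcons s true) \/ ext (rcons s false).
Proof.
case=> z [Pz Hz]; case Ez: (z (size s)); [left|right]; exists z; split=> // i;
 rewrite size_rcons ltnS leq_eqVlt => /orP [/eqP ->|Hi].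
- by rewrite nth_rcons ltnn eqxx Ez.
- by rewrite nth_rcons Hi Hz.
- by rewrite nth_rcons ltnn eqxx Ez.
- by rewrite nth_rcons Hi Hz.
Qed.

Lemma ext_pre y n : ext (pre y n).1.
Proof.
elim: n => [|n IH]; first by case: Pne => z Pz; exists z.
rewrite /= /step; case E: (asb (br _)) => /=.
  by move/asbP: E => [H1 H2]; case: (y _).
case E2: (asb _); first by move/asbP: E2.
move/asbF: E2 => E2; by case: (ext_rcons IH).
Qed.

Lemma P_G y : P (Gm y).
Proof.
apply: Pcl => N; have [z [Pz Hz]] := ext_pre y N; exists z; split=> // i Hi.
by rewrite Hz ?(pre_size y N).1 // -pref_G nth_mkseq.
Qed.

Lemma pre_agree y z n : (forall i, i < n -> y i = z i) -> pre y n = pre z n.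
Proof.
elim: n => [//|n IH] H; rewrite /= IH; last by move=> i Hi; apply: H; apply: ltnW.
rewrite /step; case: asb => //; rewrite H //; have := (pre_size z n).2; by [].
Qed.

Lemma ext_prefP z n : P z -> ext (pref z n).
Proof. by move=> Pz; exists z; split=> // i; rewrite size_mkseq => Hi; rewrite nth_mkseq. Qed.

Lemma pref_eq y z m : (forall i, i < m -> y i = z i) -> pref y m = pref z m.
Proof.
move=> H; apply: (@eq_from_nth _ false); rewrite ?size_mkseq // => i Hi.
by rewrite !nth_mkseq // H.
Qed.

Lemma nbspec_uniq x n m1 m2 : nbspec x n m1 -> nbspec x n m2 -> m1 = m2.
Proof.
move=> [H1 [B1 N1]] [H2 [B2 N2]]; apply/eqP; rewrite eqn_leq; apply/andP; split;
  rewrite leqNgt; apply/negP => Hlt.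
- by apply: (N1 m2).
- by apply: (N2 m1).
Qed.

Lemma nextbr_spec x n m : nbspec x n m -> nextbr x n = m.
Proof.
move=> Hm; apply: (nbspec_uniq _ Hm); rewrite /nextbr.
by apply: epsilon_spec; exists m.
Qed.

Section Fside.
Variable x : nat -> bool.
Hypothesis Px : P x.

Lemma br_exists n : exists m, n <= m /\ brx x m.
Proof.
have [y [Py [Hag [i Hi]]]] := Pperf Px n.
pose Q := fun i => y i != x i.
have Hex : exists i, Q i by exists i.
case: (ex_minnP Hex) => m Qm Hmin.
have Hlt : forall j, j < m -> y j = x j.
  move=> j Hj; apply/eqP; apply: contraTT Hj => Hn; rewrite -leqNgt; exact: Hmin.
exists m; split.
  rewrite leqNgt; apply/negP => Hmn; move: Qm; rewrite /Q Hag //; by rewrite eqxx.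
have Hp : pref y m = pref x m by apply: pref_eq.
have Ex : ext (rcons (pref x m) (x m)) by rewrite /pref -mkseqS; exact: (ext_prefP m.+1 Px).
have Ey : ext (rcons (pref x m) (y m)) by rewrite -Hp /pref -mkseqS; exact: (ext_prefP m.+1 Py).
rewrite /brx /br; move: Qm Ex Ey; rewrite /Q.
by case: (x m); case: (y m) => // _ A B; split.
Qed.

Lemma nextbr_ok n : nbspec x n (nextbr x n).
Proof.
rewrite /nextbr; apply: epsilon_spec.
have [m [Hm Bm]] := br_exists n.
have [k [[Hk Bk] Hmin]] := least_nat (Q := fun k => n <= k /\ brx x k) (ex_intro _ m (conj Hm Bm)).
exists k; split=> // ; split=> // j Hj Hjk Bj; exact: (Hmin j Hjk).
Qed.

Lemma nk_br k : brx x (nk x k).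
Proof. case: k => [|k] /=; [case: (nextbr_ok 0) | case: (nextbr_ok (nk x k).+1)]; by move=> _ []. Qed.

Lemma nk_lt k : nk x k < nk x k.+1.
Proof. by case: (nextbr_ok (nk x k).+1). Qed.

Lemma nk_mono k l : k < l -> nk x k < nk x l.
Proof.
elim: l => // l IH; rewrite ltnS leq_eqVlt => /orP [/eqP ->|H]; first exact: nk_lt.
exact: ltn_trans (IH H) (nk_lt l).
Qed.

Lemma nk_inj k l : nk x k = nk x l -> k = l.
Proof.
move=> E; case: (ltngtP k l) => // H; have := nk_mono H; by rewrite E ltnn.
Qed.

Lemma nk_ge k : k <= nk x k.
Proof. elim: k => // k IH; exact: leq_ltn_trans IH (nk_lt k). Qed.

Lemma br_nk n : brx x n -> exists k, nk x k = n.
Proof.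
move=> Bn.
have [k0 [Hk0 Hmin]] := least_nat (Q := fun k => n <= nk x k) (ex_intro _ n (nk_ge n)).
exists k0; apply/eqP; rewrite eqn_leq Hk0 andbT.
case: k0 Hk0 Hmin => [|k] Hk Hmin /=.
  case: (nextbr_ok 0) => _ [_ N]; rewrite leqNgt; apply/negP => Hlt; exact: (N n).
case: (nextbr_ok (nk x k).+1) => _ [_ N]; rewrite leqNgt; apply/negP => Hlt.
apply: (N n) => //; rewrite ltnNge; apply/negP => Hle; exact: (Hmin k).
Qed.

Lemma count_step c n : (forall k, k < c <-> nk x k < n) ->
  (brx x n -> nk x c = n /\ forall k, k < c.+1 <-> nk x k < n.+1) /\
  (~ brx x n -> forall k, k < c <-> nk x k < n.+1).
Proof.
move=> I; split.
  move=> Bn; have [k0 Ek0] := br_nk Bn.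
  have Hc : c = k0.
    apply/eqP; rewrite eqn_leq; apply/andP; split.
      rewrite leqNgt; apply/negP => H; move: (proj1 (I k0) H); by rewrite Ek0 ltnn.
    case: k0 Ek0 => // k0 Ek0; apply: (proj2 (I k0)); rewrite -Ek0; exact: nk_lt.
  subst c; split=> // k; rewrite !ltnS [k <= k0]leq_eqVlt [nk x k <= n]leq_eqVlt; split.
    case/orP => [/eqP Ek|H]; first by apply/orP; left; rewrite Ek Ek0.
    by rewrite (proj1 (I k) H) orbT.
  case/orP => [/eqP E|H]; last by rewrite (proj2 (I k) H) orbT.
  by rewrite (nk_inj (etrans E (esym Ek0))) eqxx.
move=> NB k; rewrite ltnS [nk x k <= n]leq_eqVlt; split; first by move=> H; rewrite (proj1 (I k) H) orbT.
case/orP => [/eqP E|H]; last exact: (proj2 (I k) H); exfalso; apply: NB; rewrite -E; exact: nk_br.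
Qed.

Lemma GF n : Gm (Fm x) n = x n.
Proof.
pose y := Fm x.
have J : forall n, (pre y n).1 = pref x n /\ forall k, k < (pre y n).2 <-> nk x k < n.
  elim=> [|m [J1 J2]] /=; first by split=> // k; rewrite ltn0.
  have [Cb Cn] := count_step J2.
  rewrite /step J1; case E: (asb _) => /=.
    move/asbP: E => B; have [E1 E2] := Cb B; split=> //.
    by rewrite /pref mkseqS /y /Fm E1.
  move/asbF: E => B; split; last exact: Cn.
  rewrite /pref mkseqS; congr rcons.
  have Ex : ext (rcons (pref x m) (x m)) by rewrite /pref -mkseqS; exact: (ext_prefP m.+1 Px).
  case Xm: (x m) Ex => Ex; first by apply/asbP.
  apply/asbF => Et; apply: B; by split.
by rewrite /Gm (J n.+1).1 /pref nth_mkseq.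
Qed.

Lemma F_cont k y : P y -> (forall i, i < (nk x k).+1 -> y i = x i) -> Fm y k = Fm x k.
Proof.
move=> Py Hag.
have Hbr : forall m, m <= nk x k -> (brx y m <-> brx x m).
  move=> m Hm; rewrite /brx; have -> : pref y m = pref x m; last by [].
  apply: pref_eq => i Hi; apply: Hag; rewrite ltnS; apply: ltnW; exact: leq_trans Hi Hm.
have E : forall j, j <= k -> nk y j = nk x j.
  elim=> [|j IH] Hj /=.
    apply: nextbr_spec; case: (nextbr_ok 0) => A [B C]; split=> //.
    have Hle : nextbr x 0 <= nk x k by rewrite -/(nk x 0) -(subnK Hj) addnC; case: (k - 0) => [|k'] //; apply: ltnW; exact: (@nk_mono 0 k'.+1).
    split; first by apply/Hbr.
    move=> j' H1 H2; rewrite Hbr; [exact: C|]; apply: ltnW; exact: leq_trans H2 Hle.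
  rewrite IH ?(ltnW Hj) //; apply: nextbr_spec.
  case: (nextbr_ok (nk x j).+1) => A [B C]; split=> //.
  have Hle : nk x j.+1 <= nk x k.
    rewrite leq_eqVlt in Hj; case/orP: Hj => [/eqP <-|Hj] //; apply: ltnW; exact: nk_mono.
  split; first by apply/Hbr.
  move=> j' H1 H2; rewrite Hbr; [exact: C|]; apply: ltnW; exact: leq_trans H2 Hle.
by rewrite /Fm E // Hag.
Qed.
End Fside.

Lemma FG y k : Fm (Gm y) k = y k.
Proof.
pose x := Gm y.
have Px : P x by apply: P_G.
have I : forall n, forall j, j < (pre y n).2 <-> nk x j < n.
  elim=> [|m IH] /=; first by move=> j; rewrite ltn0.
  have [Cb Cn] := count_step Px IH.
  rewrite /step; case E: (asb _) => /=.
    move/asbP: E => B; apply: (Cb _).2; by rewrite /brx /x pref_G.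
  move/asbF: E => B; apply: Cn; by rewrite /brx /x pref_G.
pose n := nk x k.
have Bn : brx x n by apply: nk_br.
have [Cb _] := count_step Px (I n).
have [E1 _] := Cb Bn.
have Ec : (pre y n).2 = k by apply: (nk_inj Px).
rewrite /Fm -/n /x /Gm /= /step.
have -> : asb (br (pre y n).1) = true by apply/asbP; rewrite -pref_G.
by rewrite /= nth_rcons (pre_size y n).1 ltnn eqxx Ec.
Qed.

Lemma G_cont y t : forall z, (forall i, i < t.+1 -> z i = y i) -> Gm z t = Gm y t.
Proof. by move=> z H; rewrite /Gm (pre_agree H). Qed.

End PerfectCantor.

Lemma asb_bool (b : bool) : asb b = b.
Proof. by case: b; [apply/asbP | apply/asbF]. Qed.

Section Transport.
Variable T : countType.
Variable S : (T -> Prop) -> Prop.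
Hypothesis Sext : forall xi eta, (forall t, xi t <-> eta t) -> S xi -> S eta.
Hypothesis Scl : forall xi, (forall F : seq T, exists eta, S eta /\ forall t, t \in F -> (eta t <-> xi t)) -> S xi.
Hypothesis Sne : exists xi, S xi.
Hypothesis Sperf : forall xi, S xi -> forall F : seq T, exists eta, S eta /\
  (forall t, t \in F -> (eta t <-> xi t)) /\ exists t, ~ (eta t <-> xi t).

Definition enc (xi : T -> Prop) (n : nat) : bool :=
  match pickle_inv n with Some t => asb (xi t) | None => false end.
Definition dec (x : nat -> bool) (t : T) : Prop := x (pickle t).
Definition PP x := S (dec x) /\ forall n, @pickle_inv T n = None -> x n = false.

Lemma dec_enc xi t : dec (enc xi) t <-> xi t.
Proof. rewrite /dec /enc pickleK_inv; exact: asbP. Qed.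

Lemma enc_dec x n : PP x -> enc (dec x) n = x n.
Proof.
move=> [_ H]; rewrite /enc; case E: (pickle_inv n) => [t|]; last by rewrite H.
by have := @pickle_invK T n; rewrite E /= => <-; rewrite /dec asb_bool.
Qed.

Lemma PP_enc xi : S xi -> PP (enc xi).
Proof.
move=> Sxi; split; last by move=> n; rewrite /enc => ->.
by apply: (Sext _ Sxi) => t; rewrite dec_enc.
Qed.

Lemma PPcl x : (forall N, exists y, PP y /\ forall i, i < N -> y i = x i) -> PP x.
Proof.
move=> H; split.
  apply: Scl => F; have [y [[Sy _] Hy]] := H (\max_(t <- F) pickle t).+1.
  exists (dec y); split=> // t tF; rewrite /dec Hy //; rewrite ltnS.
  by rewrite (big_rem t tF) /= leq_maxl.
move=> n En; have [y [[_ Hy0] Hy]] := H n.+1; by rewrite -Hy // Hy0.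
Qed.

Lemma PPne : exists x, PP x.
Proof. by case: Sne => xi Sxi; exists (enc xi); apply: PP_enc. Qed.

Lemma PPperf x : PP x -> forall N, exists y, PP y /\
   (forall i, i < N -> y i = x i) /\ exists i, y i != x i.
Proof.
move=> [Sx Hx] N; have [eta [Seta [Hag [t Ht]]]] := Sperf Sx (pmap pickle_inv (iota 0 N)).
exists (enc eta); split; first exact: PP_enc.
split.
  move=> i Hi; rewrite /enc; case E: (pickle_inv i) => [u|]; last by rewrite Hx.
  have Hu : u \in pmap pickle_inv (iota 0 N) by rewrite mem_pmap; apply/mapP; exists i; rewrite ?mem_iota ?E.
  have := @pickle_invK T i; rewrite E /= => Pu.
  case Ex: (x i).
    apply/asbP; apply/Hag => //; by rewrite /dec Pu.
  apply/asbF => He; move/(Hag u Hu): He; by rewrite /dec Pu Ex.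
exists (pickle t); rewrite /enc pickleK_inv; apply/negP => /eqP E; apply: Ht.
rewrite /dec; split.
  by move=> He; rewrite -E; apply/asbP.
by move=> Hx'; apply/asbP; rewrite E.
Qed.

Lemma transport : cantor_space S.
Proof.
pose f xi := Fm PP (enc xi).
pose g x := dec (Gm PP x).
have PG : forall x, PP (Gm PP x) by move=> x; apply: P_G; [exact: PPcl|exact: PPne].
exists f, g; split; first by move=> x; case: (PG x).
split.
  move=> xi Sxi t; rewrite /g /f /dec GF; [exact: dec_enc|exact: PPperf|exact: PP_enc].
split.
  move=> x n; rewrite /f /g.
  have -> : enc (dec (Gm PP x)) = Gm PP x by apply: functional_extensionality => m; apply: enc_dec.
  apply: FG; [exact: PPcl|exact: PPne|exact: PPperf].
split.
  move=> xi Sxi n; exists (pmap pickle_inv (iota 0 (nk PP (enc xi) n).+1)) => eta Seta Hag.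
  rewrite /f; apply: F_cont; [exact: PPperf|exact: PP_enc|exact: PP_enc|].
  move=> i Hi; rewrite /enc; case E: (pickle_inv i) => [u|] //.
  have Hu : u \in pmap pickle_inv (iota 0 (nk PP (enc xi) n).+1).
    by rewrite mem_pmap; apply/mapP; exists i; rewrite ?mem_iota ?E.
  case Ex: (asb (xi u)).
    by apply/asbP; apply/(Hag u Hu); apply/asbP.
  by apply/asbF => He; move/asbF: Ex; apply; apply/(Hag u Hu).
move=> x t; exists (pickle t).+1 => y Hy; rewrite /g /dec.
by rewrite (@G_cont PP x (pickle t) y Hy).
Qed.
End Transport.

Section Gen.
Variable G : bsg.
Notation L := (letter G).

Lemma linv_neq (a : L) : linv a != a.
Proof. by case: a => e [] ; rewrite /linv /= xpair_eqE eqxx. Qed.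

Lemma linvK (a : L) : linv (linv a) = a.
Proof. by case: a => e b; rewrite /linv /= negbK. Qed.

Lemma lmul_can (b : seq L) (t : L) : lmul (linv t) (rcons b t) = b.
Proof.
by rewrite /lmul last_rcons linvK eqxx size_rcons /= -cats1 take_size_cat.
Qed.

Lemma lmul_ne (b : seq L) (t a : L) : a != linv t -> lmul a (rcons b t) = rcons (rcons b t) a.
Proof.
move=> H; rewrite /lmul last_rcons; case: eqP => // E; move: H; by rewrite E linvK eqxx.
Qed.

Lemma lmul_nil (a : L) : lmul a [::] = [:: a].
Proof. by rewrite /lmul /= eq_sym (negbTE (linv_neq a)). Qed.

Lemma reduced_rcons (b : seq L) t a : reduced (rcons (rcons b t) a) = reduced (rcons b t) && (a != linv t).
Proof.
rewrite /reduced; case: b => [|x b]; first by rewrite /= andbT.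
by rewrite !rcons_cons /= rcons_path last_rcons.
Qed.

Lemma take_rcons (b : seq L) a k : take k (rcons b a) = if k <= size b then take k b else rcons b a.
Proof.
rewrite -cats1 take_cat; case: (ltngtP k (size b)) => H.
- by [].
- have : 0 < k - size b by rewrite subn_gt0.
  by case: (k - size b).
- by rewrite H subnn take0 cats0 take_size.
Qed.

Lemma config_take (xi : seq L -> Prop) w k : config xi -> xi w -> xi (take k w).
Proof. by case=> _ [_ [H _]] /H. Qed.

Lemma config_prefix (xi : seq L -> Prop) b a : config xi -> xi (rcons b a) -> xi b.
Proof.
move=> C H; have := config_take (size b) C H; by rewrite take_rcons leqnn take_size.
Qed.

Lemma config_red (xi : seq L -> Prop) w : config xi -> xi w -> reduced w.
Proof. by case=> H _ /H. Qed.

Lemma cfg_last (xi : seq L -> Prop) b t : config xi -> xi (rcons b t) ->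
  (t.2 = true -> forall a, xi (lmul a (rcons b t)) <-> (a.2 = false /\ src a.1 = src t.1)) /\
  (t.2 = false -> (forall a, xi (lmul a (rcons b t)) -> a.2 = true /\ rng a.1 = rng t.1) /\
     forall e, rng e = rng t.1 -> exists g, (cls g = cls e /\ xi (lmul (g, true) (rcons b t))) /\
       forall g', cls g' = cls e -> xi (lmul (g', true) (rcons b t)) -> g' = g).
Proof.
move=> C X; have Xb : xi (lmul (linv t) (rcons b t)) by rewrite lmul_can; exact: config_prefix C X.
case: C => _ [_ [_ Loc]]; case: (Loc _ X) => [[v [Pv H]]|[v [Pv [H1 H2]]]].
  have [E1 E2] := (H (linv t)).1 Xb; split.
    by move=> _ a; rewrite H; move: E2; rewrite /linv /= => ->.
  by move=> Ht; move: E1; rewrite /linv /= Ht.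
have [E1 E2] := H1 _ Xb; split; first by move=> Ht; move: E1; rewrite /linv /= Ht.
by move=> _; move: E2; rewrite /linv /= => ->; split.
Qed.

Lemma cfg_root (xi : seq L -> Prop) : config xi ->
  (exists v, part v = true /\ forall a, xi [:: a] <-> (a.2 = false /\ src a.1 = v)) \/
  (exists v, part v = false /\ (forall a, xi [:: a] -> a.2 = true /\ rng a.1 = v) /\
     forall e, rng e = v -> exists g, (cls g = cls e /\ xi [:: (g, true)]) /\
       forall g', cls g' = cls e -> xi [:: (g', true)] -> g' = g).
Proof.
move=> C; case: C => _ [X0 [_ Loc]]; case: (Loc _ X0) => [[v [Pv H]]|[v [Pv [H1 H2]]]].
  by left; exists v; split=> // a; rewrite -H lmul_nil.
right; exists v; split=> //; split; first by move=> a; rewrite -lmul_nil; apply: H1.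
move=> e /H2 [g [[C X] U]]; exists g; split; first by rewrite -lmul_nil.
by move=> g' C' X'; apply: U; rewrite ?lmul_nil.
Qed.

Variable v0 : vtx G.
Variable sel : seq L -> edg G -> Prop.

Definition stepok (b : seq L) (a : L) : Prop :=
  if nilp b then
    (if part v0 then a.2 = false /\ src a.1 = v0 else a.2 = true /\ rng a.1 = v0 /\ sel [::] a.1)
  else let t := last a b in
    if t.2 then a.2 = false /\ src a.1 = src t.1 /\ a.1 <> t.1
    else a.2 = true /\ rng a.1 = rng t.1 /\ cls a.1 <> cls t.1 /\ sel b a.1.

Definition cand (b : seq L) (g : edg G) : Prop :=
  if nilp b then part v0 = false /\ rng g = v0
  else let t := last (g, true) b in
    t.2 = false /\ rng g = rng t.1 /\ cls g <> cls t.1.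

Inductive gen : seq L -> Prop :=
| gen0 : gen [::]
| genS b a : gen b -> stepok b a -> gen (rcons b a).

Lemma stepok_nil a : stepok [::] a =
  (if part v0 then a.2 = false /\ src a.1 = v0 else a.2 = true /\ rng a.1 = v0 /\ sel [::] a.1).
Proof. by []. Qed.

Lemma stepok_rcons b t a : stepok (rcons b t) a =
    if t.2 then a.2 = false /\ src a.1 = src t.1 /\ a.1 <> t.1
    else a.2 = true /\ rng a.1 = rng t.1 /\ cls a.1 <> cls t.1 /\ sel (rcons b t) a.1.
Proof. by rewrite /stepok /nilp size_rcons /= last_rcons. Qed.

Lemma cand_nil g : cand [::] g = (part v0 = false /\ rng g = v0).
Proof. by []. Qed.

Lemma cand_rcons b t g : cand (rcons b t) g = (t.2 = false /\ rng g = rng t.1 /\ cls g <> cls t.1).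
Proof. by rewrite /cand /nilp size_rcons /= last_rcons. Qed.

Lemma gen_rcons b a : gen (rcons b a) <-> gen b /\ stepok b a.
Proof.
split; last by case=> *; apply: genS.
move=> H; inversion H as [E|b' a' Hb Ha E].
  by move: (congr1 size E); rewrite size_rcons.
by case: (rcons_inj E) => <- <-.
Qed.

Lemma gen_take w k : gen w -> gen (take k w).
Proof.
elim=> [|b a Hb IH Ha]; first by case: k; constructor.
rewrite take_rcons; case: ifP => // _; exact: genS.
Qed.

Lemma stepok_ne b t a : stepok (rcons b t) a -> a != linv t.
Proof.
rewrite stepok_rcons; case: a t => e x [f y] /=; rewrite /linv /= xpair_eqE.
case: y => [[-> [_ H]]|[-> [_ [H _]]]] /=; apply/negP => /andP [/eqP E _]; apply: H; by rewrite E.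
Qed.

Lemma gen_red w : gen w -> reduced w.
Proof.
elim=> [|b a Hb IH Ha] //; case/lastP: b Hb IH Ha => [|b t] Hb IH Ha //.
by rewrite reduced_rcons IH (stepok_ne Ha).
Qed.

Hypothesis Hsel : forall b g, gen b -> cand b g ->
  exists g', cls g' = cls g /\ sel b g' /\ forall g'', cls g'' = cls g -> sel b g'' -> g'' = g'.

Lemma gen_config : config gen.
Proof.
split; first exact: gen_red.
split; first by constructor.
split; first by move=> w k; apply: gen_take.
case/lastP => [|b t] Hg.
  case Pv: (part v0).
    left; exists v0; split=> // a; rewrite lmul_nil -[[:: a]]/(rcons [::] a) gen_rcons stepok_nil Pv.
    by split; [case|move=> H; split=> //; constructor].
  right; exists v0; split=> //; split.
    move=> a; rewrite lmul_nil -[[:: a]]/(rcons [::] a) gen_rcons stepok_nil Pv; by case=> _ [-> [-> _]].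
  move=> e Re; have [g [Cg [Sg Ug]]] := @Hsel [::] e gen0 (conj Pv Re); exists g; split.
    split=> //; rewrite lmul_nil -[[:: _]]/(rcons [::] _) gen_rcons stepok_nil Pv; split; first by constructor.
    by split=> //; split=> //; rewrite -Re; apply: cls_rng.
  move=> g' Cg'; rewrite lmul_nil -[[:: _]]/(rcons [::] _) gen_rcons stepok_nil Pv => [[_ [_ [_ S']]]].
  exact: Ug.
case: t Hg => e [] Hg.
  left; exists (src e); split; first exact: src_part.
  move=> a; case: (eqVneq a (linv (e, true))) => [->|Ha].
    rewrite lmul_can; split=> _; [by []|]; move/gen_rcons: Hg; by case.
  rewrite lmul_ne // gen_rcons stepok_rcons /=; split; first by case=> _ [-> [-> _]].
  case=> A B; split=> //; split=> //; split=> // E; move: Ha; rewrite /linv /=.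
  by case: a A B E => a1 a2 /= -> _ ->; rewrite eqxx.
right; exists (rng e); split; first exact: rng_part.
split.
  move=> a; case: (eqVneq a (linv (e, false))) => [->|Ha]; first by [].
  rewrite lmul_ne // gen_rcons stepok_rcons /=; by case=> _ [-> [-> _]].
move=> e0 Re0; case: (classic (cls e0 = cls e)) => Ce.
  exists e; split.
    split=> //; have -> : (e, true) = linv (e, false) by [].
    by rewrite lmul_can; move/gen_rcons: Hg; case.
  move=> g' Cg'; case: (eqVneq g' e) => // Hne; rewrite lmul_ne; last first.
    by rewrite /linv /= xpair_eqE negb_and Hne.
  rewrite gen_rcons stepok_rcons /= => [[_ [_ [_ [H _]]]]]; exfalso; apply: H; by rewrite Cg'.
have Hc : cand (rcons b (e, false)) e0 by rewrite cand_rcons /=; split; [|split].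
have [g [Cg [Sg Ug]]] := Hsel Hg Hc.
have gne : (g, true) != linv (e, false).
  rewrite /linv /= xpair_eqE negb_and; apply/orP; left; apply/eqP => E; apply: Ce; by rewrite -Cg E.
exists g; split.
  split=> //; rewrite lmul_ne // gen_rcons stepok_rcons /=; split=> //; split=> //; split.
    by rewrite -Re0; apply: cls_rng.
  by split=> // E; apply: Ce; rewrite -Cg E.
move=> g' Cg'; rewrite lmul_ne; last first.
  rewrite /linv /= xpair_eqE negb_and; apply/orP; left; apply/eqP => E; apply: Ce; by rewrite -Cg' E.
rewrite gen_rcons stepok_rcons /= => [[_ [_ [_ [_ S']]]]]; exact: Ug.
Qed.

End Gen.

Section GenOf.
Variable G : bsg.
Notation L := (letter G).

Lemma not_red_inv (xi : seq L -> Prop) b t : config xi -> ~ xi (rcons (rcons b t) (linv t)).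
Proof. move=> C /(config_red C); by rewrite reduced_rcons eqxx andbF. Qed.

Lemma config_gen (xi : seq L -> Prop) : config xi -> exists v0 sel,
  (forall b g, gen v0 sel b -> cand v0 b g ->
     exists g', cls g' = cls g /\ sel b g' /\ forall g'', cls g'' = cls g -> sel b g'' -> g'' = g') /\
  forall w, xi w <-> gen v0 sel w.
Proof.
move=> C; pose sel := fun b (g : edg G) => xi (rcons b (g, true)).
have Root := cfg_root C.
have [v0 Hroot] : exists v0, (part v0 = true /\ forall a, xi [:: a] <-> (a.2 = false /\ src a.1 = v0)) \/
  (part v0 = false /\ (forall a, xi [:: a] -> a.2 = true /\ rng a.1 = v0) /\
     forall e, rng e = v0 -> exists g, (cls g = cls e /\ xi [:: (g, true)]) /\
       forall g', cls g' = cls e -> xi [:: (g', true)] -> g' = g).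
  by case: Root => [[v H]|[v H]]; exists v; [left|right].
have K : forall b a, xi b -> (xi (rcons b a) <-> stepok v0 sel b a).
  move=> b a; case/lastP: b => [|b t] X.
    rewrite stepok_nil /=; case: Hroot => [[Pv H]|[Pv [H1 H2]]]; rewrite Pv; first exact: H.
    split; first by move=> Xa; have [A B] := H1 _ Xa; split=> //; split=> //; rewrite /sel /=; case: a A B Xa => e x /= -> .
    by case=> A [B S]; move: S; rewrite /sel /=; case: a A B => e x /= ->.
  have [A B] := cfg_last C X; rewrite stepok_rcons; case: t X A B => e [] X A B /=.
    case: (eqVneq a (linv (e, true))) => [->|Ha].
      by split=> [/(not_red_inv C)|[_ [_ []]]].
    rewrite -lmul_ne // (A erefl); split; first by case=> A1 A2; split=> //; split=> // E; move: Ha; rewrite /linv /=; case: a A1 A2 E => a1 a2 /= -> _ ->; rewrite eqxx.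
    by case=> A1 [A2 _].
  have [B1 B2] := B erefl.
  case: (eqVneq a (linv (e, false))) => [->|Ha].
    by split=> [/(not_red_inv C)|[_ [_ []]]].
  rewrite -lmul_ne //; split.
    move=> Xa; have [A1 A2] := B1 _ Xa; split=> //; split=> //.
    have Ea : a = (a.1, true) by case: a A1 {Ha Xa A2} => ? ? /= ->.
    split; last by rewrite /sel -Ea -lmul_ne.
    move=> Ecl; have [g [_ Ug]] := B2 e erefl.
    have E1 : e = g by apply: Ug => //; rewrite -[(e, true)]/(linv (e, false)) lmul_can; exact: config_prefix C X.
    have E2 : a.1 = g by apply: Ug => //; rewrite -Ea.
    move: Ha; by rewrite Ea E2 -E1 /linv /= eqxx.
  case=> A1 [_ [_ S]]; move: S; rewrite /sel.
  have Ea : a = (a.1, true) by case: a A1 {Ha} => ? ? /= ->.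
  by rewrite -Ea lmul_ne.
have EQ : forall w, xi w <-> gen v0 sel w.
  elim/last_ind => [|b a IH]; first by split=> _; [constructor|case: C => _ []].
  rewrite gen_rcons -IH; split.
    move=> X; have Xb := config_prefix C X; split=> //; exact/(K _ _ Xb).
  by case=> Xb S; apply/(K _ _ Xb).
exists v0, sel; split=> // b g /EQ X; case/lastP: b X => [|b t] X.
  rewrite cand_nil; case: Hroot => [[Pv _] [Pf]|[Pv [H1 H2]] [_ Rg]]; first by rewrite Pv in Pf.
  have [g' [[Cg X'] U]] := H2 g Rg; exists g'; split=> //; split=> //.
rewrite cand_rcons; case: t X => e x X /= [Ex [Rg Cg]]; subst x.
have [_ B] := cfg_last C X; have [B1 B2] := B erefl.
have [g' [[Cg' X'] U]] := B2 g Rg.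
have Hne : forall h, cls h = cls g -> (h, true) != linv (e, false).
  move=> h Ch; rewrite /linv /= xpair_eqE negb_and; apply/orP; left; apply/eqP => E; apply: Cg; by rewrite -Ch E.
exists g'; split=> //; split; first by rewrite /sel -lmul_ne // Hne.
move=> g'' C'' S; apply: U => //; by rewrite lmul_ne // Hne.
Qed.
End GenOf.

Section Basics.
Variable G : bsg.
Notation L := (letter G).

Definition crep (h : edg G) : edg G :=
  nth h (enum (edg G)) (find (fun h' => cls h' == cls h) (enum (edg G))).

Lemma crep_has h : has (fun h' => cls h' == cls h) (enum (edg G)).
Proof. by apply/hasP; exists h; rewrite ?mem_enum. Qed.

Lemma crep_cls h : cls (crep h) = cls h.
Proof. apply/eqP; exact: (nth_find h (crep_has h)). Qed.

Lemma crep_eq h h' : cls h = cls h' -> crep h = crep h'.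
Proof.
move=> E; rewrite /crep E; apply: set_nth_default.
by rewrite -has_find -E crep_has.
Qed.

Lemma crep_id h : crep (crep h) = crep h.
Proof. by apply: crep_eq; rewrite crep_cls. Qed.

Definition clet (a : L) : Prop := a.2 = false /\
  exists f g, rng f = rng a.1 /\ cls f <> cls a.1 /\ cls g = cls f /\ g <> f.

Lemma prefix_gen v0 sel p w : prefix p w -> @gen G v0 sel w -> gen v0 sel p.
Proof. rewrite prefixE => /eqP <-; exact: gen_take. Qed.

Lemma prefix_rcons_neq (p : seq L) a : ~~ prefix (rcons p a) p.
Proof. apply/negP => /size_prefix; by rewrite size_rcons ltnn. Qed.

Lemma stepok_sel v0 sel (b : seq L) a : b != [::] -> stepok v0 sel b a -> a.2 = true -> sel b a.1.
Proof.
case/lastP: b => [|b t] // _; rewrite stepok_rcons; case: (t.2); first by case=> ->.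
by case=> _ [_ [_ S]].
Qed.

Lemma prefix_rconsW (p w : seq L) a : prefix p w -> prefix p (rcons w a).
Proof. move=> H; exact: prefix_trans H (prefix_rcons _ _). Qed.
End Basics.

Section Modify.
Variable G : bsg.
Notation L := (letter G).
Variables (v0 : vtx G) (sel : seq L -> edg G -> Prop).
Hypothesis Hsel : forall b g, gen v0 sel b -> cand v0 b g ->
  exists g', cls g' = cls g /\ sel b g' /\ forall g'', cls g'' = cls g -> sel b g'' -> g'' = g'.
Variables (beta : seq L) (fcl y y' : edg G).
Hypothesis Hbeta : gen v0 sel beta.
Hypothesis Hbne : beta != [::].
Hypothesis Hy : sel beta y.
Hypothesis Hyu : forall h, cls h = cls fcl -> sel beta h -> h = y.
Hypothesis Hy'c : cls y' = cls fcl.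
Hypothesis Hyc : cls y = cls fcl.
Hypothesis Hy'y : y' <> y.

Definition sel' (b : seq L) (h : edg G) : Prop :=
  if prefix (rcons beta (y', true)) b then crep h = h
  else if (b == beta) && (cls h == cls fcl) then h = y' else sel b h.

Lemma sel'_eq b h : ~~ prefix (rcons beta (y', true)) b -> ~~ ((b == beta) && (cls h == cls fcl)) ->
  sel' b h = sel b h.
Proof. by move=> H1 H2; rewrite /sel' (negbTE H1) (negbTE H2). Qed.

Lemma AG w : ~~ prefix (rcons beta (y, true)) w -> ~~ prefix (rcons beta (y', true)) w ->
  (gen v0 sel w <-> gen v0 sel' w).
Proof.
elim/last_ind: w => [|w a IH] H1 H2; first by split=> _; constructor.
have H1' : ~~ prefix (rcons beta (y, true)) w by apply: contra H1; apply: prefix_rconsW.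
have H2' : ~~ prefix (rcons beta (y', true)) w by apply: contra H2; apply: prefix_rconsW.
rewrite !gen_rcons (IH H1' H2').
suff -> : stepok v0 sel w a = stepok v0 sel' w a by [].
case/lastP: w IH H1 H2 H1' H2' => [|w t] IH H1 H2 H1' H2'.
  have N1 : ~~ prefix (rcons beta (y', true)) [::] by rewrite prefixs0 -size_eq0 size_rcons.
  have N2 : ~~ (([::] == beta) && (cls a.1 == cls fcl)) by rewrite eq_sym (negbTE Hbne).
  by rewrite !stepok_nil sel'_eq.
rewrite !stepok_rcons; case: (t.2) => //.
case E: ((rcons w t == beta) && (cls a.1 == cls fcl)); last by rewrite sel'_eq ?E.
move/andP: E => [/eqP Eb /eqP Ec]; apply: propositional_extensionality; split.
  case=> A [_ [_ S]]; exfalso; rewrite Eb in S; have Ea := Hyu Ec S.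
  have Ea' : a = (y, true) by move: A Ea {Ec S}; case: a {H1 H2} => ? ? /= -> ->.
  by move: H1; rewrite Ea' Eb prefix_refl.
case=> A [_ [_ S]]; exfalso; move: S; rewrite /sel' Eb (negbTE (prefix_rcons_neq _ _)) eqxx Ec eqxx /= => Ea.
have Ea' : a = (y', true) by move: A Ea {Ec}; case: a {H1 H2} => ? ? /= -> ->.
by move: H2; rewrite Ea' Eb prefix_refl.
Qed.

Lemma gen'_noty w : gen v0 sel' w -> ~~ prefix (rcons beta (y, true)) w.
Proof.
move=> Hw; apply/negP => Hp; have := prefix_gen Hp Hw; rewrite gen_rcons => [[_ S]].
have := stepok_sel Hbne S erefl; rewrite /sel' /= (negbTE (prefix_rcons_neq _ _)) eqxx /=.
by rewrite Hyc eqxx => E; apply: Hy'y; rewrite E.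
Qed.

Lemma Hsel' : forall b g, gen v0 sel' b -> cand v0 b g ->
  exists g', cls g' = cls g /\ sel' b g' /\ forall g'', cls g'' = cls g -> sel' b g'' -> g'' = g'.
Proof.
move=> b g Hb Hc; case P1: (prefix (rcons beta (y', true)) b).
  exists (crep g); rewrite /sel' P1 crep_cls crep_id; split=> //; split=> // g'' C1 E.
  by rewrite -E (crep_eq C1).
case P2: ((b == beta) && (cls g == cls fcl)).
  move/andP: P2 => [/eqP Eb /eqP Eg]; exists y'; rewrite Hy'c Eg; split=> //.
  have E : forall h, cls h = cls fcl -> sel' b h = (h = y').
    by move=> h Ch; rewrite /sel' P1 Eb eqxx Ch eqxx.
  split; first by rewrite E.
  by move=> g'' Cg''; rewrite E.
have Hb' : gen v0 sel b by apply/(AG (gen'_noty Hb)); rewrite ?P1.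
have [g' [Cg' [S' U']]] := Hsel Hb' Hc; exists g'; split=> //.
have Neq : forall h, cls h = cls g -> ~~ ((b == beta) && (cls h == cls fcl)) by move=> h ->; rewrite P2.
split; first by rewrite sel'_eq ?P1 ?Neq.
by move=> g'' C'' S''; apply: U' => //; rewrite -sel'_eq ?P1 ?Neq.
Qed.
End Modify.

Section Rules.
Variable G : bsg.
Notation L := (letter G).

Lemma dcl_base (A : L -> Prop) a : A a -> dclosure A a.
Proof. by move=> H B HB _; apply: HB. Qed.

Lemma dcl_r1 (A : L -> Prop) e : (exists e', src e' = src e /\ e' <> e) ->
  (forall e', src e' = src e -> e' <> e -> dclosure A (e', false)) -> dclosure A (e, true).
Proof.
move=> Ex H B HB HdB; apply: (HdB.1 (src e) e (src_part e) erefl Ex) => e' E1 E2.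
exact: H.
Qed.

Lemma dcl_r2 (A : L -> Prop) e : (exists f, rng f = rng e /\ cls f <> cls e) ->
  (forall f, rng f = rng e -> cls f <> cls e -> exists g, cls g = cls f /\ dclosure A (g, true)) ->
  dclosure A (e, false).
Proof.
move=> Ex H B HB HdB; apply: (HdB.2 (rng e) e (rng_part e) erefl Ex _ e erefl).
by move=> f E1 E2; have [g [Cg D]] := H f E1 E2; exists g; split=> //; apply: D.
Qed.

Lemma adm_stepP (t a : L) : adm_step t a ->
  (t.2 = true -> a.2 = false /\ src a.1 = src t.1 /\ a.1 <> t.1) /\
  (t.2 = false -> a.2 = true /\ rng a.1 = rng t.1 /\ cls a.1 <> cls t.1).
Proof.
case: t a => e x [f z]; rewrite /adm_step /lsrc /ltgt => /andP [/eqP E /andP [N1 N2]].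
move: E N1 N2; case: x; case: z => /= E N1 N2; split=> // _.
- by have := src_part e; rewrite E rng_part.
- split=> //; split=> // Ef; move: N1; by rewrite Ef eqxx.
- split=> //; split=> // Ef; move: N2; by rewrite Ef eqxx.
- by have := rng_part e; rewrite E src_part.
Qed.

Lemma arith1 m1 m2 r1 r2 K : m1 < m2 -> r1 < K -> m1 * K + r1 < m2 * K + r2.
Proof.
move=> Hm Hr; apply: (@leq_trans (m1.+1 * K)); first by rewrite mulSnr -addnS leq_add2l.
apply: leq_trans (leq_addr _ _); exact: leq_mul.
Qed.

Lemma arith2 m1 m2 r1 r2 K : m1 <= m2 -> r1 < r2 -> m1 * K + r1 < m2 * K + r2.
Proof. move=> Hm Hr; rewrite -addnS; apply: leq_add => //; exact: leq_mul. Qed.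

Lemma count_lt (T : eqType) (P1 P2 : pred T) (s : seq T) :
  (forall x, P1 x -> P2 x) -> (exists2 x, x \in s & P2 x && ~~ P1 x) -> count P1 s < count P2 s.
Proof.
move=> H [x xs /andP [A B]]; elim: s xs => // y s IH; rewrite inE => /orP [/eqP <-|xs] /=.
  rewrite (negbTE B) A /= add0n add1n ltnS; apply: sub_count => z; exact: H.
rewrite -addnS; apply: leq_add; last exact: IH.
by case E: (P1 y) => //; rewrite (H _ E).
Qed.
End Rules.

Section Iso.
Variable G : bsg.
Notation L := (letter G).
Variables (xi : seq L -> Prop) (v0 : vtx G) (sel : seq L -> edg G -> Prop).
Hypothesis C : config xi.
Hypothesis Hsel : forall b g, gen v0 sel b -> cand v0 b g ->
  exists g', cls g' = cls g /\ sel b g' /\ forall g'', cls g'' = cls g -> sel b g'' -> g'' = g'.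
Hypothesis EQ : forall w, xi w <-> gen v0 sel w.
Variable F : seq (seq L).
Hypothesis iso : forall eta, config eta -> agree F eta xi -> forall w, eta w <-> xi w.

Definition chnode (b : seq L) := xi b /\ exists b' e, b = rcons b' (e, false) /\ clet (e, false).

Lemma K1 beta : chnode beta -> exists2 w, w \in F & prefix beta w.
Proof.
case=> Xb [b [e [Eb [_ [f [g' [Rf [Cf [Cg' Ng]]]]]]]]].
have Gb : gen v0 sel beta by apply/EQ.
have Hc : cand v0 beta f by rewrite Eb cand_rcons.
have [y [Cy [Sy Uy]]] := Hsel Gb Hc.
pose y' := if y == f then g' else f.
have Cy' : cls y' = cls f by rewrite /y'; case: ifP.
have Ny : y' <> y by rewrite /y'; case: eqP => [->|/nesym //].
apply: NNPP => Hno.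
have Hno' : forall z w, w \in F -> ~~ prefix (rcons beta z) w.
  move=> z w wF; apply/negP => P; apply: Hno; exists w => //; exact: prefix_trans (prefix_rcons _ _) P.
have Bne : beta != [::] by rewrite Eb -size_eq0 size_rcons.
have Hs' := Hsel' Hsel Bne Uy Cy' Cy Ny.
pose eta := gen v0 (sel' sel beta f y').
have Ceta : config eta by apply: gen_config.
have AG' := @AG G v0 sel beta f y y' Bne Uy.
have Ag : agree F eta xi.
  move=> w wF; rewrite EQ; symmetry; apply: AG'; exact: Hno'.
have := iso Ceta Ag (rcons beta (y', true)); rewrite EQ => [[H1 _]].
have Gy' : gen v0 sel (rcons beta (y', true)).
  apply: H1; rewrite /eta gen_rcons; split.
    exact: (proj1 (AG' beta (@prefix_rcons_neq G beta (y, true)) (@prefix_rcons_neq G beta (y', true)))) Gb.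
  rewrite Eb stepok_rcons /=; split=> //; split; first by rewrite -Rf; apply: cls_rng.
  split; first by rewrite Cy'.
  by rewrite /sel' -Eb (negbTE (prefix_rcons_neq _ _)) eqxx Cy' eqxx.
move/gen_rcons: Gy' => [_ S]; have := stepok_sel Bne S erefl => /= /(Uy _ Cy'); exact: Ny.
Qed.

Lemma ext_child b t a : xi (rcons b t) -> stepok v0 sel (rcons b t) a -> xi (rcons (rcons b t) a).
Proof. by move=> X S; apply/EQ; apply/gen_rcons; split=> //; apply/EQ. Qed.

Lemma fwd_child b e f : xi (rcons b (e, false)) -> rng f = rng e -> cls f <> cls e ->
  exists g, cls g = cls f /\ xi (rcons (rcons b (e, false)) (g, true)).
Proof.
move=> X Rf Cf; have Gb : gen v0 sel (rcons b (e, false)) by apply/EQ.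
have Hc : cand v0 (rcons b (e, false)) f by rewrite cand_rcons; split; [|split].
have [g [Cg [Sg _]]] := Hsel Gb Hc.
exists g; split=> //; apply: ext_child => //; rewrite stepok_rcons /=; split=> //; split.
  by rewrite -Rf; apply: cls_rng.
by split=> //; rewrite Cg.
Qed.

Lemma transplant w : forall b t, xi (rcons b t) ->
  (forall beta, chnode beta -> ~~ prefix (rcons b t) beta) ->
  sorted (@adm_step G) (t :: w) -> clet (last t w) -> False.
Proof.
elim: w => [|a w IH] b t X N S Cl.
  case: t X N Cl S => e x X N [/= Ex Cl] _; subst x.
  by have := N _ (conj X (ex_intro _ b (ex_intro _ e (conj erefl (conj erefl Cl))))); rewrite prefix_refl.
move: S => /= /andP [A P].
have [A1 A2] := adm_stepP A.
have Xa : xi (rcons (rcons b t) a).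
  apply: ext_child => //; rewrite stepok_rcons; case: t X N A A1 A2 {IH Cl P} => e [] X N A A1 A2 /=.
    by have [-> [-> ?]] := A1 erefl.
  have [Ea [Ra Ca]] := A2 erefl; split=> //; split=> //; split=> //.
  have Gb : gen v0 sel (rcons b (e, false)) by apply/EQ.
  have Hc : cand v0 (rcons b (e, false)) a.1 by rewrite cand_rcons; split; [|split].
  have [y [Cy [Sy Uy]]] := Hsel Gb Hc.
  case: (eqVneq a.1 y) => [-> //|Ny]; exfalso.
  have := N (rcons b (e, false)); rewrite prefix_refl => H; suff : false by []; apply: H.
  split=> //; exists b, e; split=> //; split=> //; exists a.1, y; split=> //; split=> //; split=> //.
  by move=> E; move: Ny; rewrite E eqxx.
apply: (IH (rcons b t) a Xa) => //.
move=> beta Cb; apply/negP => Pb; have := N _ Cb; by rewrite (prefix_trans (prefix_rcons _ _) Pb).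
Qed.

Lemma transplant_de b t : xi (rcons b t) ->
  (forall beta, chnode beta -> ~~ prefix (rcons b t) beta) -> dead_end t.
Proof.
move=> X N [w [x0 [Ad [E2 [f [g [Rf [Cf [Cg Ng]]]]]]]]].
move: Ad => /andP [_ S]; apply: (transplant X N S).
by split=> //; exists f, g.
Qed.

Definition PL : seq (seq L) := flatten [seq [seq take k w | k <- iota 0 (size w).+1] | w <- F].

Lemma inPL p w : w \in F -> prefix p w -> p \in PL.
Proof.
move=> wF Pp; apply/flatten_mapP; exists w => //; apply/mapP; exists (size p).
  by rewrite mem_iota add0n ltnS size_prefix.
by move: Pp; rewrite prefixE => /eqP ->.
Qed.

Definition Lm := \max_(p <- PL) size p.

Lemma size_PL p : p \in PL -> size p <= Lm.
Proof. by move=> pP; rewrite /Lm (big_rem p pP) /= leq_maxl. Qed.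

Lemma chPL b : chnode b -> b \in PL.
Proof. by move=> /K1 [w wF Pw]; apply: inPL Pw. Qed.

Definition mm (a : seq L) := count (fun b => asb (chnode b) && prefix a b) PL.
Definition mu (a : seq L) := mm a * Lm.+2 + (Lm.+1 - size a).

Lemma mu_child al a : (exists b, chnode b /\ prefix al b) -> mu (rcons al a) < mu al.
Proof.
case=> b0 [Cb0 Pb0].
have Hs : size al <= Lm by apply: leq_trans (size_prefix Pb0) (size_PL (chPL Cb0)).
have Hle : mm (rcons al a) <= mm al.
  apply: sub_count => b /andP [-> P] /=; exact: prefix_trans (prefix_rcons _ _) P.
rewrite /mu size_rcons.
case: (classic (chnode al)) => Ch.
  have Hlt : mm (rcons al a) < mm al.
    apply: count_lt; first by move=> b /andP [-> P]; rewrite (prefix_trans (prefix_rcons _ _) P).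
    exists al; first exact: chPL.
    have Ha : asb (chnode al) by apply/asbP.
    by rewrite Ha prefix_refl (negbTE (prefix_rcons_neq _ _)).
  apply: arith1 => //; rewrite ltnS; exact: leq_subr.
apply: arith2 => //; rewrite subnS prednK // subn_gt0 ltnS //.
Qed.

Lemma config_prefixP p w : xi w -> prefix p w -> xi p.
Proof. by move=> X; rewrite prefixE => /eqP <-; apply: config_take. Qed.

Lemma prefix_strict (p w : seq L) : prefix p w -> p != w -> exists a, prefix (rcons p a) w.
Proof.
case/prefixP => [[|a s] ->]; first by rewrite cats0 eqxx.
by move=> _; exists a; rewrite -cat_rcons prefix_prefix.
Qed.

Lemma mainQ n : forall b t, mu (rcons b t) < n -> xi (rcons b t) -> dclosure (@dead_end G) t.
Proof.
elim: n => // n IH b t Hmu X.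
case: (classic (exists beta, chnode beta /\ prefix (rcons b t) beta)) => [Hex|Hno]; last first.
  apply: dcl_base; apply: (transplant_de X) => beta Cb; apply/negP => P; apply: Hno; exists beta.
  by split.
have IHc : forall a, xi (rcons (rcons b t) a) -> dclosure (@dead_end G) a.
  move=> a Xa; apply: (IH (rcons b t) a) => //; exact: leq_trans (mu_child a Hex) Hmu.
have Hch : chnode (rcons b t) \/ exists a, xi (rcons (rcons b t) a).
  case: Hex => beta [Cb Pb]; case: (eqVneq (rcons b t) beta) => [->|Ne]; first by left.
  right; have [a Pa] := prefix_strict Pb Ne; exists a; apply: config_prefixP Pa.
  by case: Cb.
have Gb : gen v0 sel (rcons b t) by apply/EQ.
case: t X Hch IHc Gb {Hmu Hex} => e [] X Hch IHc Gb.
  apply: dcl_r1.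
    case: Hch => [[_ [b' [e' [E _]]]]|[a Xa]]; first by case: (rcons_inj E).
    move/EQ/gen_rcons: Xa => [_]; rewrite stepok_rcons /= => [[_ [S N]]]; by exists a.1.
  move=> e' S N; apply: IHc; apply: ext_child => //; by rewrite stepok_rcons.
apply: dcl_r2.
  case: Hch => [[_ [b' [e' [E [_ [f [g [Rf [Cf _]]]]]]]]]|[a Xa]].
    case: (rcons_inj E) => _ ->; by exists f.
  move/EQ/gen_rcons: Xa => [_]; rewrite stepok_rcons /= => [[_ [R [Cl _]]]]; by exists a.1.
move=> f Rf Cf; have [g [Cg Xg]] := fwd_child X Rf Cf; exists g; split=> //; exact: IHc.
Qed.

Lemma iso_V v : config_v v xi -> Vset (@dead_end G) v.
Proof.
rewrite /config_v /Vset; case Pv: (part v).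
  case=> e [Se Xe]; right; split=> //.
  have := Xe; rewrite EQ -[[:: _]]/(rcons [::] _) gen_rcons stepok_nil => [[_]].
  case P0: (part v0) => H; last by case: H.
  case: H => _ S0; have Ev : v0 = v by rewrite -S0 Se.
  move=> e' Se'; apply: (@mainQ (mu [:: (e', false)]).+1 [::] (e', false)) => //.
  apply/EQ; apply/(gen_rcons v0 sel [::] (e', false)); rewrite stepok_nil P0 Se' Ev; split=> //; constructor.
case=> e [Re [f [Cf Xf]]]; left; split=> //.
have := Xf; rewrite EQ -[[:: _]]/(rcons [::] _) gen_rcons stepok_nil => [[_]].
case P0: (part v0) => H; first by case: H.
case: H => _ [R0 _].
have Ev : v0 = v by rewrite -R0 -Re; exact: cls_rng Cf.
move=> e' Re'.
have Hc : cand v0 [::] e' by rewrite cand_nil P0 Ev.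
have [g [Cg [Sg _]]] := Hsel (gen0 v0 sel) Hc.
exists g; split=> //; apply: (@mainQ (mu [:: (g, true)]).+1 [::] (g, true)) => //.
apply/EQ; apply/(gen_rcons v0 sel [::] (g, true)); rewrite stepok_nil P0; split; first by constructor.
by split=> //; split=> //; rewrite Ev -Re'; apply: cls_rng.
Qed.
End Iso.

Lemma bound_nat (T : eqType) (s : seq T) (P : T -> nat -> Prop) :
  (forall x n m, n <= m -> P x n -> P x m) ->
  (forall x, x \in s -> exists n, P x n) -> exists N, forall x, x \in s -> P x N.
Proof.
move=> Mono; elim: s => [|y s IH] H; first by exists 0.
have [n Hn] := H y (mem_head _ _).
have [N HN] := IH (fun x xs => H x (@mem_behead _ (y :: s) x xs)).
exists (maxn n N) => x; rewrite inE => /orP [/eqP ->|xs].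
  by apply: Mono Hn; apply: leq_maxl.
by apply: Mono (HN x xs); apply: leq_maxr.
Qed.

Lemma bound_list (T U : eqType) (s : seq T) (R : T -> U -> Prop) :
  (forall x, x \in s -> exists l : seq U, forall w, R x w -> w \in l) ->
  exists L : seq U, forall x, x \in s -> forall w, R x w -> w \in L.
Proof.
elim: s => [|y s IH] H; first by exists [::].
have [l Hl] := H y (mem_head _ _).
have [L HL] := IH (fun x xs => H x (@mem_behead _ (y :: s) x xs)).
exists (l ++ L) => x; rewrite inE => /orP [/eqP ->|xs] w Rw; rewrite mem_cat.
  by rewrite Hl.
by rewrite (HL x xs w Rw) orbT.
Qed.

Section Stages.
Variable G : bsg.
Notation L := (letter G).

Definition R1 (B : L -> Prop) (e : edg G) :=
  (exists e', src e' = src e /\ e' <> e) /\ forall e', src e' = src e -> e' <> e -> B (e', false).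
Definition R2 (B : L -> Prop) (g : edg G) :=
  (exists f, rng f = rng g /\ cls f <> cls g) /\
  forall f, rng f = rng g -> cls f <> cls g -> exists h, cls h = cls f /\ B (h, true).

Fixpoint St (n : nat) (a : L) : Prop :=
  match n with
  | 0 => dead_end a
  | n.+1 => St n a \/ (a.2 = true /\ R1 (St n) a.1) \/ (a.2 = false /\ R2 (St n) a.1)
  end.

Lemma St_S n a : St n a -> St n.+1 a.
Proof. by left. Qed.

Lemma St_mono n m a : n <= m -> St n a -> St m a.
Proof.
move=> H; elim: m H => [|m IH]; first by rewrite leqn0 => /eqP ->.
rewrite leq_eqVlt => /orP [/eqP -> //|H] Sn; apply: St_S; exact: IH.
Qed.

Lemma dcl_St a : dclosure (@dead_end G) a -> exists n, St n a.
Proof.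
move=> D; apply: (D (fun a => exists n, St n a)); first by move=> b Db; exists 0.
split.
  move=> v e Pv Se Ex H.
  have Hx : forall x, x \in enum (edg G) -> exists n, (src x = v -> x <> e -> St n (x, false)).
    move=> x _; case: (classic (src x = v /\ x <> e)) => [[S N]|N]; first by have [n Hn] := H x S N; exists n.
    by exists 0 => S N'; exfalso; apply: N.
  have [N HN] := @bound_nat _ (enum (edg G)) (fun e' n => src e' = v -> e' <> e -> St n (e', false))
    (fun x n m Hnm Hx S N => St_mono Hnm (Hx S N)) Hx.
  exists N.+1; right; left; split=> //; split; first by rewrite Se.
  by move=> e' S' N'; apply: HN; rewrite ?mem_enum // S'.
move=> v e Pv Re Ex H g Cg.
have Hx : forall x, x \in enum (edg G) -> exists n,
   (rng x = v -> cls x <> cls e -> exists h, cls h = cls x /\ St n (h, true)).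
  move=> x _; case: (classic (rng x = v /\ cls x <> cls e)) => [[S N]|N].
    by have [h [Ch [n Hn]]] := H x S N; exists n => _ _; exists h.
  by exists 0 => S N'; exfalso; apply: N.
have [N HN] := @bound_nat _ (enum (edg G))
   (fun f n => rng f = v -> cls f <> cls e -> exists h, cls h = cls f /\ St n (h, true))
   (fun x n m Hnm Hx S N => match Hx S N with ex_intro h (conj C1 C2) => ex_intro _ h (conj C1 (St_mono Hnm C2)) end)
   Hx.
have Rg : rng g = v by rewrite -Re; apply: cls_rng.
exists N.+1; right; right; split=> //; split.
  by case: Ex => f [Rf Cf]; exists f; rewrite Rg Cg.
by move=> f Rf Cf; apply: HN; rewrite ?mem_enum // -?Rg -?Cg.
Qed.
End Stages.

Section Rep.
Variable G : bsg.
Notation L := (letter G).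

Definition rkspec (h : edg G) n := St n (h, true) /\ forall m, m < n -> ~ St m (h, true).
Definition rk (h : edg G) : nat := epsilon (inhabits 0) (rkspec h).

Lemma rk_spec h n : St n (h, true) -> St (rk h) (h, true) /\ rk h <= n.
Proof.
move=> Sn; have [k [Sk Mk]] := @least_nat (fun m => St m (h, true)) (ex_intro _ n Sn).
have : rkspec h (rk h) by apply: epsilon_spec; exists k.
case=> S M; split=> //; rewrite leqNgt; apply/negP => H; exact: M n H Sn.
Qed.

Definition good (h : edg G) : pred (edg G) :=
  fun h' => (cls h' == cls h) && asb (exists n, St n (h', true)).

Definition cr (h : edg G) : edg G :=
  match [pick h' | good h h'] with
  | Some h0 => [arg min_(h' < h0 | good h h') rk h']
  | None => crep h
  end.

Lemma good_eq h h' : cls h = cls h' -> good h = good h'.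
Proof. by move=> E; rewrite /good E. Qed.

Lemma cr_eq h h' : cls h = cls h' -> cr h = cr h'.
Proof. by move=> E; rewrite /cr (good_eq E) (crep_eq E). Qed.

Lemma cr_cls h : cls (cr h) = cls h.
Proof.
rewrite /cr; case: pickP => [h0 G0|_]; last exact: crep_cls.
by case: arg_minnP => // i /andP [/eqP -> _].
Qed.

Lemma cr_id h : cr (cr h) = cr h.
Proof. by apply: cr_eq; rewrite cr_cls. Qed.

Lemma cr_St h n : St n (h, true) -> St n (cr h, true).
Proof.
move=> Sn; have Gh : good h h by rewrite /good eqxx /=; apply/asbP; exists n.
rewrite /cr; case: pickP => [h0 G0|N]; last by rewrite N in Gh.
case: arg_minnP => // i /andP [_ /asbP [m Sm]] M.
have [Si Hi] := rk_spec Sm; have [_ Hh] := rk_spec Sn.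
apply: St_mono Si; exact: leq_trans (M h Gh) Hh.
Qed.

Definition cstep (a b : L) : Prop :=
  if a.2 then b.2 = false /\ src b.1 = src a.1 /\ b.1 <> a.1
  else b.2 = true /\ rng b.1 = rng a.1 /\ cls b.1 <> cls a.1 /\ cr b.1 = b.1.
Definition cstepb (a b : L) : bool := asb (cstep a b).

Lemma cstep_adm a b : cstep a b -> adm_step a b.
Proof.
case: a b => e x [f z]; rewrite /cstep /adm_step /lsrc /ltgt /=.
case: x => [[-> [S N]]|[-> [R [Cl _]]]] /=.
  by rewrite S eqxx andbT; apply/eqP => E; apply: N.
by rewrite R eqxx /=; apply/eqP.
Qed.

Lemma csorted_adm w : sorted cstepb w -> sorted (@adm_step G) w.
Proof.
case: w => // a w /=; elim: w a => // b w IH a /= /andP [/asbP H P].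
by rewrite cstep_adm // IH.
Qed.

Definition fin (a : L) := exists l : seq (seq L), forall w, sorted cstepb (a :: w) -> clet (last a w) -> w \in l.

Lemma fin_St n a : St n a -> fin a.
Proof.
elim: n a => [|n IH] a.
  move=> D; exists [::] => w S [E2 [f [g H]]]; exfalso; apply: D; exists w, a; split.
    by rewrite /admissible (csorted_adm S).
  by split=> //; exists f, g.
case=> [|[[A [Ex R]]|[A [Ex R]]]]; first exact: IH.
  have Hx : forall x, x \in enum (edg G) -> exists l : seq (seq L), forall w,
      (src x = src a.1 /\ x <> a.1 /\ sorted cstepb ((x, false) :: w) /\ clet (last (x, false) w)) -> w \in l.
    move=> x _; case: (classic (src x = src a.1 /\ x <> a.1)) => [[S N]|N].
      by have [l Hl] := IH _ (R x S N); exists l => w [_ [_ [P Q]]]; apply: Hl.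
    by exists [::] => w [S [N' _]]; exfalso; apply: N.
  have [L0 HL] := bound_list Hx.
  exists [seq (x, false) :: w | x <- enum (edg G), w <- L0] => [[|[x z] w]] /=.
    by move=> _ [E _]; rewrite A in E.
  move=> /andP [/asbP St' P] Cl; rewrite /cstep A /= in St'; case: St' => Ez [S N]; subst z.
  by apply/allpairsP; exists (x, w); split=> //; rewrite ?mem_enum //; apply: (HL x); rewrite ?mem_enum.
have Hx : forall x, x \in enum (edg G) -> exists l : seq (seq L), forall w,
    (rng x = rng a.1 /\ cls x <> cls a.1 /\ cr x = x /\ sorted cstepb ((x, true) :: w) /\ clet (last (x, true) w)) -> w \in l.
  move=> x _; case: (classic (rng x = rng a.1 /\ cls x <> cls a.1 /\ cr x = x)) => [[Rx [Cx Ex']]|N].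
    have [h [Ch Sh]] := R x Rx Cx.
    have : St n (x, true) by rewrite -Ex' -(cr_eq Ch); apply: cr_St.
    by move=> /IH [l Hl]; exists l => w [_ [_ [_ [P Q]]]]; apply: Hl.
  by exists [::] => w [Rx [Cx [E _]]]; exfalso; apply: N.
have [L0 HL] := bound_list Hx.
exists ([::] :: [seq (x, true) :: w | x <- enum (edg G), w <- L0]) => [[|[x z] w]] /=.
  by rewrite inE eqxx.
move=> /andP [/asbP St' P] Cl; rewrite /cstep A /= in St'; case: St' => Ez [Rx [Cx Ex']]; subst z.
rewrite inE; apply/orP; right.
by apply/allpairsP; exists (x, w); split=> //; rewrite ?mem_enum //; apply: (HL x); rewrite ?mem_enum.
Qed.
End Rep.

Lemma pairT G (a : letter G) : a.2 = true -> a = (a.1, true).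
Proof. by case: a => ? ? /= ->. Qed.
Lemma pairF G (a : letter G) : a.2 = false -> a = (a.1, false).
Proof. by case: a => ? ? /= ->. Qed.

Section Build.
Variable G : bsg.
Notation L := (letter G).
Variable v : vtx G.
Definition selc (b : seq L) (h : edg G) : Prop := cr h = h.
Definition xic := gen v selc.

Lemma Hselc b g : gen v selc b -> cand v b g ->
  exists g', cls g' = cls g /\ selc b g' /\ forall g'', cls g'' = cls g -> selc b g'' -> g'' = g'.
Proof.
move=> _ _; exists (cr g); rewrite cr_cls /selc cr_id; split=> //; split=> // g'' C E.
by rewrite -E (cr_eq C).
Qed.

Lemma xic_config : config xic.
Proof. apply: gen_config; exact: Hselc. Qed.

Lemma gen_cons a w : gen v selc (a :: w) -> stepok v selc [::] a /\ sorted (@cstepb G) (a :: w).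
Proof.
elim/last_ind: w => [|w x IH].
  by rewrite -[[:: a]]/(rcons [::] a) => /gen_rcons [_ S].
rewrite -rcons_cons => /gen_rcons [/IH [S1 S2] S]; split=> //.
rewrite /= rcons_path; rewrite /= in S2; rewrite S2 /=; apply/asbP; exact: S.
Qed.

Hypothesis HV : Vset (@dead_end G) v.

Lemma root_fin a : stepok v selc [::] a -> fin a.
Proof.
rewrite stepok_nil; case Pv: (part v) => H0.
  case: H0 => A S; case: HV => [[Pf _]|[_ H]]; first by rewrite Pv in Pf.
  have [n Sn] := dcl_St (H a.1 S).
  by apply: (fin_St (n := n)); rewrite (pairF A).
case: H0 => A [R Ca]; case: HV => [[_ H]|[Pt _]]; last by rewrite Pv in Pt.
have [g [Cg D]] := H a.1 R.
have [n Sn] := dcl_St D.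
apply: (fin_St (n := n)); have := cr_St Sn; rewrite (cr_eq Cg); rewrite /selc in Ca; rewrite Ca.
by rewrite -(pairT A).
Qed.

Lemma Lroot_ex : exists Lr : seq (seq L), forall a, a \in enum L -> forall w,
   (stepok v selc [::] a /\ sorted (@cstepb G) (a :: w) /\ clet (last a w)) -> w \in Lr.
Proof.
apply: bound_list => a _; case: (classic (stepok v selc [::] a)) => [S|N].
  by have [l Hl] := root_fin S; exists l => w [_ [P Q]]; apply: Hl.
by exists [::] => w [S _]; exfalso; apply: N.
Qed.

Variable Lr : seq (seq L).
Hypothesis HLr : forall a, a \in enum L -> forall w,
   (stepok v selc [::] a /\ sorted (@cstepb G) (a :: w) /\ clet (last a w)) -> w \in Lr.

Definition CN := [seq a :: w | a <- enum L, w <- Lr].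

Lemma chn_CN b e : xic (rcons b (e, false)) -> clet (e, false) -> rcons b (e, false) \in CN.
Proof.
case E: (rcons b (e, false)) => [|a w]; first by move: (congr1 size E); rewrite size_rcons.
move=> X Cl; have [S P] := gen_cons X.
apply/allpairsP; exists (a, w); split; rewrite ?mem_enum //.
apply: (HLr (mem_enum _ a)); split=> //; split=> //.
have : last a w = last a (rcons b (e, false)) by rewrite E.
by rewrite last_rcons => ->.
Qed.

Definition Fc := [seq [:: a] | a <- enum L] ++ [seq rcons b a | b <- CN, a <- enum L].

Lemma xic_isolated : isolated xic.
Proof.
exists Fc => eta Ceta Ag.
have [v' [sel' [Hs' EQ']]] := config_gen Ceta.
suff H : forall w, xic w <-> eta w by move=> w; rewrite H.
elim/last_ind => [|b a IH]; first by split=> _; [case: Ceta => _ [] | constructor].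
case: (eqVneq b [::]) => [->|Nb].
  symmetry; apply: Ag; rewrite mem_cat; apply/orP; left; apply/mapP; by exists a; rewrite ?mem_enum.
case: (boolP (b \in CN)) => [Bc|Nc].
  symmetry; apply: Ag; rewrite mem_cat; apply/orP; right; apply/allpairsP; by exists (b, a); split; rewrite ?mem_enum.
rewrite /xic EQ' !gen_rcons -EQ' -/xic IH.
case: (classic (eta b)) => Eb; last by split; case.
have Xb : xic b by apply/IH.
suff : stepok v selc b a <-> stepok v' sel' b a by move=> E; split; case=> H1 H2; split=> //; apply/E.
case/lastP: b Nb Nc IH Eb Xb => [|b t] // _ Nc IH Eb Xb.
rewrite !stepok_rcons; case: t Nc IH Eb Xb => e [] Nc IH Eb Xb //=.
have NCl : ~ clet (e, false) by move=> Cl; move: Nc; rewrite chn_CN.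
have Gb : gen v' sel' (rcons b (e, false)) by apply/EQ'.
split; case=> A [R [Cl S]]; split=> //; split=> //; split=> //.
  have Hc : cand v' (rcons b (e, false)) a.1 by rewrite cand_rcons.
  have [g' [Cg' [Sg' _]]] := Hs' _ _ Gb Hc.
  suff -> : a.1 = g' by [].
  apply: NNPP => N; apply: NCl; split=> //; exists a.1, g'; split=> //; split=> //; split=> //.
  by move=> E; apply: N; rewrite E.
rewrite /selc; apply: NNPP => N; apply: NCl; split=> //; exists a.1, (cr a.1); split=> //; split=> //.
by split=> //; apply: cr_cls.
Qed.
End Build.

Section Final.
Variable G : bsg.
Notation L := (letter G).
Hypothesis Hs : forall v : vtx G, part v = true -> exists e, src e = v.
Hypothesis Hr : forall v : vtx G, part v = false -> exists e, rng e = v.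

Lemma isolated_V v (xi : seq L -> Prop) : config xi -> config_v v xi -> isolated xi -> Vset (@dead_end G) v.
Proof.
move=> C Cv [F iso]; have [v0 [sel [Hsel EQ]]] := config_gen C.
exact: (iso_V C Hsel EQ iso Cv).
Qed.

Lemma V_isolated v : Vset (@dead_end G) v -> exists xi : seq L -> Prop, config xi /\ config_v v xi /\ isolated xi.
Proof.
move=> HV; have [Lr HLr] := Lroot_ex HV.
exists (xic v); split; first exact: xic_config.
split; last exact: (xic_isolated HLr).
rewrite /config_v; case Pv: (part v).
  have [e Se] := Hs Pv; exists e; split=> //.
  rewrite /xic -[[:: _]]/(rcons [::] _); apply/gen_rcons; rewrite stepok_nil Pv; split=> //; constructor.
have [e Re] := Hr Pv; exists e; split=> //; exists (cr e); split; first exact: cr_cls.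
rewrite /xic -[[:: _]]/(rcons [::] _); apply/gen_rcons; rewrite stepok_nil Pv; split; first by constructor.
split=> //; split; last exact: cr_id.
by rewrite -Re; apply: cls_rng; apply: cr_cls.
Qed.

Lemma config_has_v (xi : seq L -> Prop) : config xi -> exists v, config_v v xi.
Proof.
move=> C; case: (cfg_root C) => [[v [Pv H]]|[v [Pv [H1 H2]]]]; exists v; rewrite /config_v Pv.
  have [e Se] := Hs Pv; exists e; split=> //; by apply/H.
have [e Re] := Hr Pv; exists e; split=> //.
by have [g [[Cg X] _]] := H2 e Re; exists g.
Qed.

Lemma config_ext (xi eta : seq L -> Prop) : (forall t, xi t <-> eta t) -> config xi -> config eta.
Proof.
move=> H; have -> : xi = eta by apply: functional_extensionality => t; apply: propositional_extensionality.
by [].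
Qed.

Lemma config_closed (xi : seq L -> Prop) :
  (forall F : seq (seq L), exists eta, config eta /\ forall t, t \in F -> (eta t <-> xi t)) -> config xi.
Proof.
move=> H; split.
  move=> w X; have [eta [C A]] := H [:: w]; apply: (config_red C).
  exact: (proj2 (A w (mem_head _ _)) X).
split.
  have [eta [C A]] := H [:: [::]]; apply: (proj1 (A [::] (mem_head _ _))); by case: C => _ [].
split.
  move=> w k X; have [eta [C A]] := H [:: w; take k w].
  have Hk : take k w \in [:: w; take k w] by rewrite !inE eqxx orbT.
  apply: (proj1 (A _ Hk)); apply: config_take C _; exact: (proj2 (A w (mem_head _ _)) X).
move=> al X; have [eta [C A]] := H (al :: [seq lmul a al | a <- enum L]).
have Ea : forall a, eta (lmul a al) <-> xi (lmul a al).
  move=> a; apply: A; rewrite inE; apply/orP; right; apply/mapP; exists a => //; by rewrite mem_enum.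
have Xe : eta al by exact: (proj2 (A al (mem_head _ _)) X).
case: C => _ [_ [_ Loc]]; case: (Loc _ Xe) => [[v [Pv K]]|[v [Pv [K1 K2]]]].
  left; exists v; split=> // a; rewrite -Ea; exact: K.
right; exists v; split=> //; split; first by move=> a /Ea; apply: K1.
move=> e Re; have [g [[Cg Xg] U]] := K2 e Re; exists g; split; first by split=> //; apply/Ea.
by move=> g' C' X'; apply: U => //; apply/Ea.
Qed.

Lemma config_ne (Hv : 0 < #|vtx G|) : exists xi : seq L -> Prop, config xi.
Proof.
move: Hv => /card_gt0P [v _]; exists (xic v); exact: xic_config.
Qed.

Lemma cantor_noV : cantor_space (@config G) -> forall v, ~ Vset (@dead_end G) v.
Proof.
move=> [f [g [Sg [GF [FG [Fc Gc]]]]]] v /V_isolated [xi [C [Cv [F iso]]]].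
pose x := f xi.
have [N HN] : exists N, forall t, t \in F -> forall y, (forall i, i < N -> y i = x i) -> (g y t <-> g x t).
  have := @bound_nat _ F (fun t N => forall y, (forall i, i < N -> y i = x i) -> (g y t <-> g x t)).
  case.
  - move=> t n m Hnm Ht y Hy; apply: Ht => i Hi; apply: Hy; exact: leq_trans Hi Hnm.
  - by move=> t _; apply: Gc.
  by move=> N HN; exists N.
pose y := fun i => if i == N then ~~ x N else x i.
have Ag : agree F (g y) xi.
  move=> t tF; rewrite (HN t tF y); first exact: GF.
  by move=> i Hi; rewrite /y; case: eqP => // E; rewrite E ltnn in Hi.
have E : g y = xi.
  apply: functional_extensionality => t; apply: propositional_extensionality; exact: iso (Sg y) Ag t.
have := FG y N; rewrite E /y eqxx -/x.
by case: (x N).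
Qed.

Lemma noV_cantor (Hv : 0 < #|vtx G|) : (forall v, ~ Vset (@dead_end G) v) -> cantor_space (@config G).
Proof.
move=> NV; apply: transport.
- move=> xi eta H C; exact: config_ext H C.
- exact: config_closed.
- exact: config_ne.
move=> xi C F; apply: NNPP => Hn.
have [v Cv] := config_has_v C.
apply: (NV v); apply: (isolated_V C Cv); exists F => eta Ce Ag w.
apply: NNPP => Hw; apply: Hn; exists eta; split=> //; split=> //; by exists w.
Qed.
End Final.

Unset Implicit Arguments.

Theorem proposition9 (G : bsg)
  (Hs : forall v : vtx G, part v = true -> exists e, src e = v)
  (Hr : forall v : vtx G, part v = false -> exists e, rng e = v)
  (Hv : 0 < #|vtx G|) :
  (forall v : vtx G,
     (exists xi, config xi /\ config_v v xi /\ isolated xi) <->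
     Vset (@dead_end G) v) /\
  (cantor_space (@config G) <-> forall v : vtx G, ~ Vset (@dead_end G) v).
Proof.
split.
  move=> v; split; first by case=> xi [C [Cv I]]; exact: isolated_V C Cv I.
  exact: V_isolated.
split; first exact: cantor_noV.
exact: noV_cantor.
Qed.
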